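(* For every outcome of the random choices of Algorithm 1 and every $k\in\{0,\dots,T-1\}$, $f_\mu(x_{k+1})\le f_\mu(x_k)$; moreover for every $k\in\{0,\dots,T\}$, $f_\mu(x_k)\le 0$, $Ax_k\le(1+\epsilon)\mathbf 1$ and $\mathbf 1^Tx_k\le(1+\epsilon)\mathrm{OPT}$.
   Context: Standing setup: $A\in\mathbb{R}^{m\times n}_{\ge 0}$ has no zero column and is normalized so that $\min_{i\in[n]}\|A_{:i}\|_\infty=1$, where $A_{:i}$ denotes the $i$-th column. The packing LP is $\max\{\mathbf 1^Tx: x\ge 0,\ Ax\le \mathbf 1\}$ with optimal value $\mathrm{OPT}$. $\epsilon\in(0,1/2]$. $\log$ is the natural logarithm unless written $\log_2$. $\mu=\frac{\epsilon}{4\log(nm/\epsilon)}$, $p_j(x)=\exp\big(\frac{1}{\mu}((Ax)_j-1)\big)$, and $f_\mu(x)=-\mathbf 1^Tx+\mu\sum_{j=1}^m p_j(x)$; $\nabla_i f_\mu(x)=-1+\sum_j A_{ji}p_j(x)$. Algorithm 1 (with any number $T$ of iterations): set $\alpha=\mu/20$, $w=\lceil\log_2(1/\epsilon)\rceil$, $x_0[i]=\frac{1-\epsilon/2}{n\|A_{:i}\|_\infty}$. For $k=0,\dots,T-1$: choose $t_k\in\{0,\dots,w-1\}$ uniformly at random; writing $g_i=\nabla_i f_\mu(x_k)$, define $\xi_k[i]=0$ if $|g_i|\le\epsilon$, $\xi_k[i]=g_i$ if $\epsilon<|g_i|\le 1$, $\xi_k[i]=1$ if $g_i>1$; $\xi^{(t)}_k[i]=\xi_k[i]$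 if $\epsilon2^t<|\xi_k[i]|\le\epsilon2^{t+1}$ and $0$ otherwise; $x_{k+1}[i]=x_k[i]\exp(-\alpha\,\xi^{(t_k)}_k[i])$. *)

(* Defs.v *)
From Stdlib Require Import Reals Lra.
Open Scope R_scope.

(* Vectors are functions nat -> R; x : R^n is read on indices 0..n-1;
   the matrix A : R^{m x n} is A j i (row j < m, column i < n). *)

Fixpoint rsum (K : nat) (f : nat -> R) : R :=
  match K with
  | O => 0
  | S K' => rsum K' f + f K'
  end.

(* max_{k < K} f k, with value 0 for K = 0 (only used for K = m >= 1 on
   nonnegative entries, where it is the usual maximum) *)
Fixpoint rmax (K : nat) (f : nat -> R) : R :=
  match K with
  | O => 0
  | S K' => Rmax (rmax K' f) (f K')
  end.

Definition colnorm (m : nat) (A : nat -> nat -> R) (i : nat) : R :=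
  rmax m (fun j => Rabs (A j i)).

Definition Ax (n : nat) (A : nat -> nat -> R) (x : nat -> R) (j : nat) : R :=
  rsum n (fun i => A j i * x i).

Definition sumx (n : nat) (x : nat -> R) : R := rsum n x.

Definition feasible (m n : nat) (A : nat -> nat -> R) (x : nat -> R) : Prop :=
  (forall i, (i < n)%nat -> 0 <= x i) /\
  (forall j, (j < m)%nat -> Ax n A x j <= 1).

Definition is_OPT (m n : nat) (A : nat -> nat -> R) (OPT : R) : Prop :=
  is_lub (fun v => exists x, feasible m n A x /\ v = sumx n x) OPT.

Definition mu (m n : nat) (eps : R) : R :=
  eps / (4 * ln (INR n * INR m / eps)).

Definition pj (m n : nat) (A : nat -> nat -> R) (eps : R) (x : nat -> R) (j : nat) : R :=
  exp ((Ax n A x j - 1) / mu m n eps).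

Definition fmu (m n : nat) (A : nat -> nat -> R) (eps : R) (x : nat -> R) : R :=
  - sumx n x + mu m n eps * rsum m (fun j => pj m n A eps x j).

Definition grad (m n : nat) (A : nat -> nat -> R) (eps : R) (x : nat -> R) (i : nat) : R :=
  -1 + rsum m (fun j => A j i * pj m n A eps x j).

(* xi from g; the case g < -1 never occurs (g >= -1 always) *)
Definition xi_of (eps g : R) : R :=
  if Rle_dec (Rabs g) eps then 0
  else if Rlt_dec 1 g then 1
  else g.

Definition xi_t (eps : R) (t : nat) (v : R) : R :=
  if Rlt_dec (eps * 2 ^ t) (Rabs v) then
    (if Rle_dec (Rabs v) (eps * 2 ^ (S t)) then v else 0)
  else 0.

Definition x0 (m n : nat) (A : nat -> nat -> R) (eps : R) (i : nat) : R :=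
  (1 - eps / 2) / (INR n * colnorm m A i).

(* iterates of Algorithm 1 for the random choices t : nat -> nat *)
Fixpoint iter_x (m n : nat) (A : nat -> nat -> R) (eps : R) (t : nat -> nat)
    (k : nat) : nat -> R :=
  match k with
  | O => x0 m n A eps
  | S k' =>
      let xk := iter_x m n A eps t k' in
      fun i => xk i * exp (- (mu m n eps / 20)
                 * xi_t eps (t k') (xi_of eps (grad m n A eps xk i)))
  end.

(* Main.v *)
Require Import Defs.
From Stdlib Require Import Reals Lra Lia.
Open Scope R_scope.

Lemma rsum_ext K f g : (forall k, (k < K)%nat -> f k = g k) -> rsum K f = rsum K g.
Proof. induction K; simpl; intros H; auto. rewrite IHK by (intros; apply H; lia). rewrite H by lia. reflexivity. Qed.

Lemma rsum_le K f g : (forall k, (k < K)%nat -> f k <= g k) -> rsum K f <= rsum K g.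
Proof. induction K; simpl; intros H; [lra|]. assert (H1 := H K ltac:(lia)). assert (rsum K f <= rsum K g) by (apply IHK; intros; apply H; lia). lra. Qed.

Lemma rsum_plus K f g : rsum K (fun k => f k + g k) = rsum K f + rsum K g.
Proof. induction K; simpl; [lra|]. rewrite IHK. ring. Qed.

Lemma rsum_scal K c f : rsum K (fun k => c * f k) = c * rsum K f.
Proof. induction K; simpl; [ring|]. rewrite IHK. ring. Qed.

Lemma rsum_opp K f : rsum K (fun k => - f k) = - rsum K f.
Proof. induction K; simpl; [ring|]. rewrite IHK. ring. Qed.

Lemma rsum_nonneg K f : (forall k, (k < K)%nat -> 0 <= f k) -> 0 <= rsum K f.
Proof. intros H. apply Rle_trans with (rsum K (fun _ => 0)).
 - clear H. induction K; simpl; lra.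
 - apply rsum_le. auto. Qed.

Lemma rsum_swap K L F : rsum K (fun k => rsum L (fun l => F k l)) = rsum L (fun l => rsum K (fun k => F k l)).
Proof. induction K; simpl.
 - clear. induction L; simpl; lra.
 - rewrite IHK. rewrite <- rsum_plus. reflexivity. Qed.

Lemma rsum_ge_term K f k : (forall k, (k < K)%nat -> 0 <= f k) -> (k < K)%nat -> f k <= rsum K f.
Proof. induction K; simpl; intros H Hk; [lia|].
 assert (0 <= rsum K f) by (apply rsum_nonneg; intros; apply H; lia).
 destruct (Nat.eq_dec k K).
 - subst. lra.
 - assert (f k <= rsum K f) by (apply IHK; [intros; apply H|]; lia).
   assert (0 <= f K) by (apply H; lia). lra. Qed.

Lemma rmax_le_rsum K f : (forall k, (k < K)%nat -> 0 <= f k) -> rmax K f <= rsum K f.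
Proof. induction K; simpl; intros H; [lra|].
 assert (rmax K f <= rsum K f) by (apply IHK; intros; apply H; lia).
 assert (0 <= f K) by (apply H; lia).
 assert (0 <= rsum K f) by (apply rsum_nonneg; intros; apply H; lia).
 apply Rmax_lub; lra. Qed.

Lemma rmax_ge K f k : (k < K)%nat -> f k <= rmax K f.
Proof. induction K; simpl; intros Hk; [lia|].
 destruct (Nat.eq_dec k K).
 - subst. apply Rmax_r.
 - eapply Rle_trans; [apply IHK; lia| apply Rmax_l]. Qed.

Lemma rsum_cs K a u C : 0 < C -> (forall k, (k < K)%nat -> 0 <= a k) -> rsum K a <= C ->
  (rsum K (fun k => a k * u k))^2 <= C * rsum K (fun k => a k * (u k)^2).
Proof. intros HC Ha HS.
 set (M := rsum K (fun k => a k * u k)). set (lam := M / C).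
 assert (H0 : 0 <= rsum K (fun k => a k * (u k - lam)^2)).
 { apply rsum_nonneg. intros. apply Rmult_le_pos; [auto|apply pow2_ge_0]. }
 assert (E : rsum K (fun k => a k * (u k - lam)^2) =
   rsum K (fun k => a k * (u k)^2) - 2 * lam * M + lam^2 * rsum K a).
 { unfold M. rewrite <- rsum_scal, <- rsum_scal.
   replace (rsum K (fun k => a k * u k ^ 2) - rsum K (fun k => 2 * lam * (a k * u k)) +
            rsum K (fun k => lam ^ 2 * a k))
   with (rsum K (fun k => a k * u k ^ 2 + (- (2 * lam * (a k * u k)) + lam ^ 2 * a k))).
   - apply rsum_ext. intros. ring.
   - rewrite !rsum_plus, rsum_opp. ring. }
 rewrite E in H0.
 assert (0 <= rsum K a) by (apply rsum_nonneg; auto).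
 assert (lam^2 * rsum K a <= lam^2 * C) by (apply Rmult_le_compat_l; nra).
 assert (lam * C = M) by (unfold lam; field; lra).
 assert (M^2 = lam^2*C*C) by (rewrite <- H2; ring).
 nra. Qed.
Lemma exp_quad y : y <= 1/2 -> exp y <= 1 + y + 2 * y^2.
Proof. intros Hy. assert (H := exp_ineq1_le (-y)).
 assert (Hp := exp_pos y). assert (E : exp (-y) * exp y = 1).
 { rewrite <- exp_plus. replace (-y+y) with 0 by ring. apply exp_0. }
 assert (exp y * (1 - y) <= 1) by nra.
 assert (0 <= y^2 * (1 - 2*y)) by (apply Rmult_le_pos; [apply pow2_ge_0|lra]).
 (* exp y <= 1/(1-y) <= 1+y+2y^2 *)
 assert ((1 + y + 2*y^2) * (1 - y) >= 1) by nra.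
 nra. Qed.

Definition sprop (s g : R) : Prop :=
  s = 0 \/ (0 < s <= 1 /\ s <= g) \/ (s < 0 /\ s = g /\ -1 <= g).

Lemma u_lemma mu s g x : 0 < mu <= 1 -> sprop s g -> 0 < x ->
  let u := 1 - exp (- (mu / 20) * s) in
  - (mu / 10) <= u <= mu / 10 /\ - x * u * g + 3 / mu * x * u^2 * (g + 1) <= 0.
Proof. intros Hmu Hs Hx u. assert (Eu0 : u = 1 - exp (- (mu / 20) * s)) by reflexivity. clearbody u.
 destruct Hs as [Hs|[[Hs1 Hs2]|[Hs1 [Hs2 Hs3]]]].
 - subst s. rewrite Eu0. replace (- (mu/20) * 0) with 0 by ring. rewrite exp_0. split; [lra|]. 
   replace (1-1) with 0 by ring. simpl. lra.
 - set (a := mu / 20 * s).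
   assert (Ha : 0 < a <= mu/20) by (unfold a; split; nra).
   assert (Eu : u = 1 - exp (-a)) by (rewrite Eu0; unfold a; f_equal; f_equal; ring).
   assert (H1 := exp_ineq1_le (-a)).
   assert (H2 : exp (-a) < 1) by (rewrite <- exp_0; apply exp_increasing; lra).
   assert (Hu : 0 < u <= a) by lra.
   split; [lra|].
   assert (u^2 <= u * a) by nra.
   assert (3 / mu * x * u^2 * (g+1) <= 3/mu * x * (u * a) * (g+1)).
   { apply Rmult_le_compat_r; [lra|]. apply Rmult_le_compat_l; [|lra].
     apply Rmult_le_pos; [|lra]. apply Rlt_le, Rdiv_lt_0_compat; lra. }
   assert (E : 3/mu * x * (u * a) * (g+1) = x * u * (3 * s / 20) * (g + 1)).
   { unfold a. field. lra. }
   assert (s * g <= g) by nra.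
   assert (x * u * (3 * s / 20) * (g + 1) <= x * u * g).
   { assert (0 < x * u) by nra.
     assert (Er : x * u * (3 * s / 20) * (g + 1) = x * u * (3 * (s * g + s) / 20)) by (unfold Rdiv; ring). rewrite Er.
     apply Rmult_le_compat_l; lra. }
   lra.
 - subst s. set (b := - (mu / 20 * g)).
   assert (Hb : 0 < b <= 1/20) by (unfold b; split; nra).
   assert (Eu : u = 1 - exp b) by (rewrite Eu0; unfold b; f_equal; f_equal; ring).
   assert (H1 := exp_ineq1_le (-b)).
   assert (H2 : 1 < exp b) by (rewrite <- exp_0; apply exp_increasing; lra).
   assert (E : exp (-b) * exp b = 1).
   { rewrite <- exp_plus. replace (-b+b) with 0 by ring. apply exp_0. }
   assert (exp b * (1 - b) <= 1) by nra.
   assert (Hu : 0 < - u <= 2 * b) by nra.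
   assert (b <= mu / 20) by (unfold b; nra).
   split; [lra|].
   assert (u^2 <= (-u) * (2*b)) by nra.
   assert (3 / mu * x * u^2 * (g+1) <= 3/mu * x * ((-u) * (2*b)) * (g+1)).
   { apply Rmult_le_compat_r; [lra|]. apply Rmult_le_compat_l; [|lra].
     apply Rmult_le_pos; [|lra]. apply Rlt_le, Rdiv_lt_0_compat; lra. }
   assert (E2 : 3/mu * x * ((-u) * (2*b)) * (g+1) = x * (-u) * (-g) * (3 / 10 * (g + 1))).
   { unfold b. field. lra. }
   assert (0 < x * (-u) * (-g)) by (apply Rmult_lt_0_compat; [nra|lra]).
   assert (x * (-u) * (-g) * (3 / 10 * (g + 1)) <= x * (-u) * (-g)) .
   { rewrite <- (Rmult_1_r (x * (-u) * (-g))) at 2. apply Rmult_le_compat_l; lra. }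
   nra.
Qed.

Lemma sprop_xi eps t g : 0 < eps -> -1 <= g -> sprop (xi_t eps t (xi_of eps g)) g.
Proof. intros He Hg. unfold sprop, xi_t, xi_of.
 destruct (Rle_dec (Rabs g) eps) as [H1|H1].
 - repeat (destruct Rlt_dec || destruct Rle_dec); auto.
 - destruct (Rlt_dec 1 g) as [H2|H2].
   + repeat (destruct Rlt_dec || destruct Rle_dec); auto. right; left; lra.
   + repeat (destruct Rlt_dec || destruct Rle_dec); auto.
     destruct (Rtotal_order g 0) as [H3|[H3|H3]].
     * right; right; lra.
     * left; lra.
     * right; left; lra.
Qed.

Lemma grad_ge m n A eps x i : (forall j, (j < m)%nat -> 0 <= A j i) -> -1 <= grad m n A eps x i.
Proof. intros H. unfold grad. assert (0 <= rsum m (fun j => A j i * pj m n A eps x j)).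
 { apply rsum_nonneg. intros. apply Rmult_le_pos; [auto| unfold pj; apply Rlt_le, exp_pos]. }
 lra. Qed.

Lemma step m n A eps x s :
 0 < mu m n eps <= 1 ->
 (forall j i, (j < m)%nat -> (i < n)%nat -> 0 <= A j i) ->
 (forall i, (i < n)%nat -> 0 < x i) ->
 (forall j, (j < m)%nat -> Ax n A x j <= 3/2) ->
 (forall i, (i < n)%nat -> sprop (s i) (grad m n A eps x i)) ->
 fmu m n A eps (fun i => x i * exp (-(mu m n eps/20) * s i)) <= fmu m n A eps x.
Proof.
 intros Hmu HA Hx HAx Hs.
 set (mu0 := mu m n eps) in *. assert (Emu : mu m n eps = mu0) by reflexivity. clearbody mu0.
 set (x' := fun i => x i * exp (-(mu0/20) * s i)).
 set (u := fun i => 1 - exp (- (mu0 / 20) * s i)).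
 set (P := fun j => pj m n A eps x j).
 set (G := fun i => rsum m (fun j => A j i * P j)).
 set (D := fun j => rsum n (fun i => A j i * x i * u i)).
 assert (Hu : forall i, (i < n)%nat -> - (mu0 / 10) <= u i <= mu0 / 10 /\
    - x i * u i * grad m n A eps x i + 3 / mu0 * x i * (u i)^2 * (grad m n A eps x i + 1) <= 0).
 { intros i Hi. apply u_lemma; auto. }
 assert (Hg : forall i, grad m n A eps x i = G i - 1).
 { intros i. unfold grad, G, P. ring. }
 assert (Hx' : forall i, x' i = x i - x i * u i).
 { intros i. unfold x', u. ring. }
 assert (I1 : sumx n x' = sumx n x - rsum n (fun i => x i * u i)).
 { unfold sumx. rewrite (rsum_ext n x' (fun i => x i + - (x i * u i))) by (intros; rewrite Hx'; ring).
   rewrite rsum_plus, rsum_opp. ring. }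
 assert (IAx : forall j, Ax n A x' j = Ax n A x j - D j).
 { intros j. unfold Ax, D. 
   rewrite (rsum_ext n (fun i => A j i * x' i) (fun i => A j i * x i + - (A j i * x i * u i)))
     by (intros; rewrite Hx'; ring).
   rewrite rsum_plus, rsum_opp. ring. }
 assert (I2 : forall j, pj m n A eps x' j = P j * exp (- D j / mu0)).
 { intros j. unfold P, pj. rewrite Emu. rewrite <- exp_plus. f_equal. rewrite IAx. field. lra. }
 assert (HD : forall j, (j < m)%nat -> - D j <= mu0 / 2).
 { intros j Hj. unfold D. rewrite <- rsum_opp.
   apply Rle_trans with (rsum n (fun i => mu0 / 10 * (A j i * x i))).
   - apply rsum_le. intros i Hi. destruct (Hu i Hi) as [[H1 H2] _].
     assert (0 <= A j i * x i) by (apply Rmult_le_pos; [auto| apply Rlt_le; auto]). nra.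
   - rewrite rsum_scal. fold (Ax n A x j). assert (H := HAx j Hj). 
     assert (0 <= Ax n A x j) by (apply rsum_nonneg; intros; apply Rmult_le_pos; [auto|apply Rlt_le; auto]).
     nra. }
 assert (HP : forall j, 0 < P j) by (intros; unfold P, pj; apply exp_pos).
 assert (I3 : rsum m (fun j => P j * D j) = rsum n (fun i => x i * u i * G i)).
 { unfold D, G. rewrite (rsum_ext m _ (fun j => rsum n (fun i => P j * (A j i * x i * u i))))
     by (intros; rewrite <- rsum_scal; reflexivity).
   rewrite rsum_swap. apply rsum_ext. intros i Hi. rewrite <- rsum_scal. apply rsum_ext. intros. ring. }
 assert (I4 : rsum m (fun j => P j * (D j)^2) <= 3/2 * rsum n (fun i => x i * (u i)^2 * G i)).
 { apply Rle_trans with (rsum m (fun j => P j * (3/2 * rsum n (fun i => A j i * x i * (u i)^2)))).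
   - apply rsum_le. intros j Hj. apply Rmult_le_compat_l; [apply Rlt_le; auto|].
     unfold D. 
     apply rsum_cs; [lra| intros; apply Rmult_le_pos; [auto|apply Rlt_le; auto] | apply HAx; auto].
   - rewrite <- rsum_scal. apply Req_le.
     rewrite (rsum_ext m _ (fun j => rsum n (fun i => 3/2 * (P j * (A j i * x i * (u i)^2))))).
     2:{ intros. rewrite <- rsum_scal, <- rsum_scal. apply rsum_ext. intros. ring. }
     rewrite rsum_swap. apply rsum_ext. intros i Hi. unfold G. rewrite <- !rsum_scal. apply rsum_ext. intros. ring. }
 assert (I5 : rsum m (fun j => pj m n A eps x' j) <=
     rsum m P - / mu0 * rsum m (fun j => P j * D j) + 2 / mu0^2 * rsum m (fun j => P j * (D j)^2)).
 { unfold Rminus. rewrite <- !rsum_scal, <- rsum_opp, <- !rsum_plus. apply rsum_le. intros j Hj.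
   rewrite I2. assert (H := exp_quad (- D j / mu0)).
   assert (H' : - D j / mu0 <= 1/2) by (apply Rmult_le_reg_r with mu0; [lra|]; 
        unfold Rdiv; rewrite Rmult_assoc, Rinv_l by lra; assert (H0 := HD j Hj); lra).
   specialize (H H'). 
   apply Rle_trans with (P j * (1 + - D j / mu0 + 2 * (- D j / mu0)^2)).
   - apply Rmult_le_compat_l; [apply Rlt_le; auto| exact H].
   - apply Req_le. field. lra. }
 assert (I6 : rsum n (fun i => x i * u i) - rsum n (fun i => x i * u i * G i) + 3 / mu0 * rsum n (fun i => x i * (u i)^2 * G i) <= 0).
 { unfold Rminus. rewrite <- rsum_scal, <- rsum_opp, <- !rsum_plus.
   apply Rle_trans with (rsum n (fun _ => 0)).
   - apply rsum_le. intros i Hi. destruct (Hu i Hi) as [_ H]. rewrite Hg in H.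
     apply Rle_trans with (2 := H). apply Req_le. ring.
   - clear. induction n; simpl; lra. }
 unfold fmu. rewrite Emu. fold x'. rewrite I1. fold P.
 assert (mu0 * rsum m (fun j => pj m n A eps x' j) <= mu0 * (rsum m P - / mu0 * rsum m (fun j => P j * D j) + 2 / mu0^2 * rsum m (fun j => P j * (D j)^2))) by (apply Rmult_le_compat_l; lra).
 assert (E : mu0 * (rsum m P - / mu0 * rsum m (fun j => P j * D j) + 2 / mu0^2 * rsum m (fun j => P j * (D j)^2)) = mu0 * rsum m P - rsum m (fun j => P j * D j) + 2 / mu0 * rsum m (fun j => P j * (D j)^2)) by (field; lra).
 assert (2 / mu0 * rsum m (fun j => P j * (D j)^2) <= 2 / mu0 * (3/2 * rsum n (fun i => x i * (u i)^2 * G i))).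
 { apply Rmult_le_compat_l; [apply Rlt_le, Rdiv_lt_0_compat; lra| exact I4]. }
 assert (E2 : 2 / mu0 * (3/2 * rsum n (fun i => x i * (u i)^2 * G i)) = 3 / mu0 * rsum n (fun i => x i * (u i)^2 * G i)) by (field; lra).
 lra.
Qed.

Lemma rsum_const K c : rsum K (fun _ => c) = INR K * c.
Proof. induction K; simpl rsum; [simpl; ring|]. rewrite IHK, S_INR. ring. Qed.

Lemma colnorm_ge m A i j : (j < m)%nat -> 0 <= A j i -> A j i <= colnorm m A i.
Proof. intros Hj Ha. unfold colnorm. rewrite <- (Rabs_pos_eq (A j i)) at 1 by auto.
 apply (rmax_ge m (fun j => Rabs (A j i))). auto. Qed.

Lemma colnorm_le_sum m A i : (forall j, (j < m)%nat -> 0 <= A j i) -> colnorm m A i <= rsum m (fun j => A j i).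
Proof. intros H. unfold colnorm. apply Rle_trans with (rsum m (fun j => Rabs (A j i))).
 - apply rmax_le_rsum. intros; apply Rabs_pos.
 - apply Req_le, rsum_ext. intros. apply Rabs_pos_eq. auto. Qed.

Section Main.
Variables (m n : nat) (A : nat -> nat -> R) (eps : R).
Hypothesis hA_nonneg : forall j i, (j < m)%nat -> (i < n)%nat -> 0 <= A j i.
Hypothesis hA_norm1 : forall i, (i < n)%nat -> 1 <= colnorm m A i.
Hypothesis heps : 0 < eps <= 1 / 2.
Hypothesis hn : (1 <= n)%nat.
Hypothesis hm : (1 <= m)%nat.

Let Z := INR n * INR m / eps.
Let L := ln Z.

Lemma Zfacts : 2 <= Z /\ eps * Z = INR n * INR m /\ 1 <= INR n /\ 1 <= INR m.
Proof. assert (Hn : 1 <= INR n) by (apply (le_INR 1); lia).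
 assert (Hm : 1 <= INR m) by (apply (le_INR 1); lia).
 unfold Z. split; [|split; [field; lra|auto]].
 apply Rmult_le_reg_r with eps; [lra|]. unfold Rdiv. rewrite Rmult_assoc, Rinv_l by lra. nra. Qed.

Lemma Lfacts : 1/2 < L /\ L <= Z - 1 /\ exp L = Z.
Proof. destruct Zfacts as [HZ _]. unfold L. split; [|split].
 - destruct (Rle_lt_or_eq_dec 2 Z HZ) as [H|H].
   + assert (ln 2 < ln Z) by (apply ln_increasing; lra). pose proof ln_lt_2. lra.
   + rewrite <- H. pose proof ln_lt_2. lra.
 - pose proof (exp_ineq1_le (ln Z)). rewrite exp_ln in H by lra. lra.
 - apply exp_ln. lra. Qed.

Lemma mu_eq : mu m n eps = eps / (4 * L).
Proof. reflexivity. Qed.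

Lemma mu_facts : 0 < mu m n eps <= 1.
Proof. rewrite mu_eq. destruct Lfacts as [H _]. split.
 - apply Rdiv_lt_0_compat; lra.
 - apply Rmult_le_reg_r with (4 * L); [lra|]. unfold Rdiv. rewrite Rmult_assoc, Rinv_l by lra. lra. Qed.

Lemma Ax_bound x : (forall i, (i < n)%nat -> 0 <= x i) -> fmu m n A eps x <= 0 ->
  forall j, (j < m)%nat -> Ax n A x j <= 1 + eps.
Proof. intros Hx Hf j0 Hj0. destruct (Rle_dec (Ax n A x j0) (1 + eps)) as [|Hgt]; [auto|exfalso].
 apply Rnot_le_lt in Hgt. set (mu0 := mu m n eps) in *.
 assert (Hmu := mu_facts). fold mu0 in Hmu.
 set (P := fun j => pj m n A eps x j).
 assert (Hs : sumx n x <= rsum m (fun j => Ax n A x j)).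
 { unfold sumx, Ax. rewrite <- rsum_swap.
   apply rsum_le. intros i Hi.
   apply Rle_trans with (x i * colnorm m A i).
   - assert (H := hA_norm1 i Hi). assert (H2 := Hx i Hi). nra.
   - apply Rle_trans with (x i * rsum m (fun j => A j i)).
     + apply Rmult_le_compat_l; [auto|]. apply colnorm_le_sum. intros; auto.
     + rewrite <- rsum_scal. apply Req_le, rsum_ext. intros. ring. }
 assert (Hterm : forall j, (j < m)%nat -> 0 <= mu0 * P j - Ax n A x j + 1).
 { intros j Hj. unfold P, pj. fold mu0. pose proof (exp_ineq1_le ((Ax n A x j - 1) / mu0)).
   assert (mu0 * (1 + (Ax n A x j - 1) / mu0) = mu0 + Ax n A x j - 1) by (field; lra).
   assert (0 <= mu0) by lra. nra. }
 assert (Hsum : mu0 * P j0 - Ax n A x j0 + 1 <= rsum m (fun j => mu0 * P j - Ax n A x j + 1)).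
 { apply (rsum_ge_term m (fun j => mu0 * P j - Ax n A x j + 1)); auto. }
 assert (Esum : rsum m (fun j => mu0 * P j - Ax n A x j + 1) = mu0 * rsum m P - rsum m (fun j => Ax n A x j) + INR m).
 { replace (INR m) with (rsum m (fun _ => 1)) by (rewrite rsum_const; ring). rewrite <- rsum_scal. unfold Rminus. rewrite <- rsum_opp, <- !rsum_plus. reflexivity. }
 unfold fmu in Hf. fold mu0 in Hf. fold P in Hf.
 (* key: mu0 * P j0 > a + m - 1 *)
 destruct Zfacts as [HZ [HeZ [Hn1 Hm1]]]. destruct Lfacts as [HL1 [HL2 HL3]].
 set (a := Ax n A x j0) in *. set (d := a - 1 - eps).
 assert (Hd : 0 < d) by (unfold d; lra).
 assert (EP : P j0 = Z^4 * exp (d / mu0)).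
 { unfold P, pj. fold mu0. fold a. replace (Z^4) with (exp (4 * L)).
   - rewrite <- exp_plus. f_equal. unfold mu0. rewrite mu_eq. unfold d. field. lra.
   - replace (4 * L) with (L + L + L + L) by ring. rewrite !exp_plus, HL3. ring. }
 assert (E1 := exp_ineq1_le (d / mu0)).
 assert (Hmu0 : mu0 = eps / (4 * L)) by apply mu_eq.
 assert (HZ4 : Z^4 * mu0 >= INR m + eps).
 { rewrite Hmu0. 
   assert (Hz3 : Z^3 >= 6 * (Z - 1)) by nra.
   assert (Z^4 * eps = Z^3 * (INR n * INR m)) by (rewrite <- HeZ; ring).
   assert (Z^3 * (INR n * INR m) >= 6 * (Z-1) * INR m).
   { assert (0 <= Z^3) by (apply pow_le; lra). assert (INR n * INR m >= INR m) by nra. nra. }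
   apply Rle_ge. apply Rmult_le_reg_r with (4 * L); [lra|]. 
   replace (Z ^ 4 * (eps / (4 * L)) * (4 * L)) with (Z^4 * eps) by (field; lra).
   assert (0 <= INR m + eps) by lra. nra. }
 assert (mu0 * P j0 >= Z^4 * (mu0 + d)).
 { rewrite EP. assert (mu0 * (1 + d/mu0) = mu0 + d) by (field; lra).
   assert (0 <= Z^4) by (apply pow_le; lra). 
   assert (mu0 * exp (d/mu0) >= mu0 + d) by (rewrite <- H; apply Rle_ge, Rmult_le_compat_l; lra).
   replace (mu0 * (Z ^ 4 * exp (d / mu0))) with (Z^4 * (mu0 * exp (d/mu0))) by ring.
   apply Rle_ge, Rmult_le_compat_l; lra. }
 assert (Z^2 >= 4) by nra. assert (Z^4 = Z^2 * Z^2) by ring. assert (Z^4 >= 16) by nra.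
 assert (Z^4 * d > d) by nra.
 assert (mu0 * P j0 > a + INR m - 1) by (unfold d in *; nra).
 nra.
Qed.

Lemma x0_pos i : (i < n)%nat -> 0 < x0 m n A eps i.
Proof. intros Hi. unfold x0. destruct Zfacts as [_ [_ [Hn1 _]]]. assert (H := hA_norm1 i Hi).
 apply Rdiv_lt_0_compat; [lra|]. nra. Qed.

Lemma f0_le (i0 : nat) : (i0 < n)%nat -> colnorm m A i0 = 1 -> fmu m n A eps (x0 m n A eps) <= 0.
Proof. intros Hi0 Hc.
 destruct Zfacts as [HZ [HeZ [Hn1 Hm1]]]. destruct Lfacts as [HL1 [HL2 HL3]].
 assert (Hmu := mu_facts). set (mu0 := mu m n eps) in *. assert (Hmu0 : mu0 = eps / (4 * L)) by apply mu_eq.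
 assert (HAx : forall j, (j < m)%nat -> Ax n A (x0 m n A eps) j <= 1 - eps/2).
 { intros j Hj. unfold Ax. apply Rle_trans with (rsum n (fun _ => (1 - eps/2) / INR n)).
   - apply rsum_le. intros i Hi. unfold x0. assert (H1 := hA_norm1 i Hi).
     assert (H2 := colnorm_ge m A i j Hj (hA_nonneg j i Hj Hi)). assert (H3 := hA_nonneg j i Hj Hi).
     replace (A j i * ((1 - eps / 2) / (INR n * colnorm m A i))) with ((A j i / colnorm m A i) * ((1 - eps/2) / INR n)) by (field; lra).
     rewrite <- (Rmult_1_l ((1 - eps/2) / INR n)) at 2. apply Rmult_le_compat_r.
     + apply Rlt_le, Rdiv_lt_0_compat; lra.
     + apply Rmult_le_reg_r with (colnorm m A i); [lra|]. unfold Rdiv. rewrite Rmult_assoc, Rinv_l by lra. lra.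
   - rewrite rsum_const. apply Req_le. field. lra. }
 assert (HP : forall j, (j < m)%nat -> pj m n A eps (x0 m n A eps) j <= / (Z * Z)).
 { intros j Hj. unfold pj. fold mu0. 
   replace (/ (Z * Z)) with (exp (- (eps / 2) / mu0)).
   - destruct (Rle_lt_or_eq_dec _ _ (HAx j Hj)) as [H|H].
     + apply Rlt_le, exp_increasing. unfold Rdiv. apply Rmult_lt_compat_r; [apply Rinv_0_lt_compat; lra| lra].
     + right. f_equal. rewrite H. field. lra.
   - replace (- (eps / 2) / mu0) with (- (L + L)) by (rewrite Hmu0; field; lra).
     rewrite exp_Ropp, exp_plus, HL3. reflexivity. }
 unfold fmu. fold mu0.
 assert (Hs : rsum m (fun j => pj m n A eps (x0 m n A eps) j) <= INR m * / (Z * Z)).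
 { rewrite <- rsum_const. apply rsum_le. auto. }
 assert (Hsx : x0 m n A eps i0 <= sumx n (x0 m n A eps)).
 { apply rsum_ge_term; auto. intros; apply Rlt_le, x0_pos; auto. }
 assert (Hx0 : x0 m n A eps i0 = (1 - eps/2) / INR n) by (unfold x0; rewrite Hc; field; lra).
 assert (mu0 * (INR m * / (Z * Z)) <= (1 - eps/2) / INR n).
 { assert (E : mu0 * (INR m * / (Z*Z)) = mu0 * eps * eps / (INR n * INR n * INR m)).
   { replace (Z * Z) with ((INR n * INR m / eps) * (INR n * INR m / eps)) by reflexivity. field. repeat split; lra. }
   rewrite E. apply Rmult_le_reg_r with (INR n * INR n * INR m); [nra|].
   unfold Rdiv at 1. rewrite Rmult_assoc, Rinv_l by nra.
   replace ((1 - eps / 2) / INR n * (INR n * INR n * INR m)) with ((1 - eps/2) * (INR n * INR m)) by (field; lra).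
   assert (eps * eps <= 1/4) by nra. assert (mu0 * (eps * eps) <= 1/4) by nra. assert (INR n * INR m >= 1) by nra. nra. }
 assert (mu0 * rsum m (fun j => pj m n A eps (x0 m n A eps) j) <= mu0 * (INR m * / (Z * Z))) by (apply Rmult_le_compat_l; lra).
 lra. Qed.

Lemma sum_opt x OPT : is_OPT m n A OPT -> (forall i, (i < n)%nat -> 0 <= x i) ->
  (forall j, (j < m)%nat -> Ax n A x j <= 1 + eps) -> sumx n x <= (1 + eps) * OPT.
Proof. intros [Hub _] Hx HAx.
 set (y := fun i => / (1 + eps) * x i).
 assert (Hy : sumx n y <= OPT).
 { apply Hub. exists y. split; [split|reflexivity].
   - intros i Hi. unfold y. apply Rmult_le_pos; [apply Rlt_le, Rinv_0_lt_compat; lra| auto].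
   - intros j Hj. unfold Ax, y. 
     rewrite (rsum_ext n _ (fun i => / (1 + eps) * (A j i * x i))) by (intros; ring).
     rewrite rsum_scal. fold (Ax n A x j). assert (H := HAx j Hj).
     apply Rmult_le_reg_l with (1 + eps); [lra|]. rewrite <- Rmult_assoc, Rinv_r by lra. lra. }
 unfold sumx, y in Hy. rewrite rsum_scal in Hy. fold (sumx n x) in Hy.
 apply Rmult_le_reg_l with (/ (1 + eps)); [apply Rinv_0_lt_compat; lra|].
 rewrite <- Rmult_assoc, Rinv_l by lra. lra. Qed.

End Main.

Lemma monot_inv m n A eps t :
  (forall j i, (j < m)%nat -> (i < n)%nat -> 0 <= A j i) ->
  (forall i, (i < n)%nat -> 1 <= colnorm m A i) ->
  0 < eps <= 1 / 2 -> (1 <= n)%nat -> (1 <= m)%nat ->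
  forall i0, (i0 < n)%nat -> colnorm m A i0 = 1 ->
  forall k, (forall i, (i < n)%nat -> 0 < iter_x m n A eps t k i) /\
    fmu m n A eps (iter_x m n A eps t (S k)) <= fmu m n A eps (iter_x m n A eps t k) /\
    fmu m n A eps (iter_x m n A eps t k) <= 0.
Proof. intros HA Hc He Hn Hm i0 Hi0 Hc0.
 assert (Hmu : 0 < mu m n eps <= 1) by (apply mu_facts; auto).
 assert (Key : forall k, (forall i, (i < n)%nat -> 0 < iter_x m n A eps t k i) ->
    fmu m n A eps (iter_x m n A eps t k) <= 0 ->
    fmu m n A eps (iter_x m n A eps t (S k)) <= fmu m n A eps (iter_x m n A eps t k)).
 { intros k Hp Hf.
   assert (HAx : forall j, (j < m)%nat -> Ax n A (iter_x m n A eps t k) j <= 1 + eps).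
   { apply Ax_bound; auto. intros; apply Rlt_le; auto. }
   apply step; auto.
   - intros j Hj. specialize (HAx j Hj). lra.
   - intros i Hi. apply sprop_xi; [lra|]. apply grad_ge. intros; auto. }
 induction k.
 - assert (Hp : forall i, (i < n)%nat -> 0 < iter_x m n A eps t 0 i) by (intros; apply x0_pos; auto).
   assert (Hf : fmu m n A eps (iter_x m n A eps t 0) <= 0) by (eapply f0_le; eauto).
   auto.
 - destruct IHk as [Hp [Hstep Hf]].
   assert (Hp' : forall i, (i < n)%nat -> 0 < iter_x m n A eps t (S k) i).
   { intros i Hi. simpl. apply Rmult_lt_0_compat; [auto| apply exp_pos]. }
   assert (Hf' : fmu m n A eps (iter_x m n A eps t (S k)) <= 0) by lra.
   split; [auto|split; [apply Key; auto|auto]].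
Qed.

Theorem claim3p5 (m n : nat) (A : nat -> nat -> R) (OPT eps : R) (w T : nat)
  (t : nat -> nat)
  (hA_nonneg : forall j i, (j < m)%nat -> (i < n)%nat -> 0 <= A j i)
  (hA_nozero : forall i, (i < n)%nat -> exists j, (j < m)%nat /\ A j i <> 0)
  (hA_norm1 : forall i, (i < n)%nat -> 1 <= colnorm m A i)
  (hA_norm2 : exists i, (i < n)%nat /\ colnorm m A i = 1)
  (hOPT : is_OPT m n A OPT)
  (heps : 0 < eps <= 1 / 2)
  (hw : INR w - 1 < ln (1 / eps) / ln 2 <= INR w)
  (ht : forall k, (k < T)%nat -> (t k < w)%nat) :
  (forall k, (k < T)%nat ->
     fmu m n A eps (iter_x m n A eps t (S k)) <= fmu m n A eps (iter_x m n A eps t k)) /\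
  (forall k, (k <= T)%nat ->
     fmu m n A eps (iter_x m n A eps t k) <= 0 /\
     (forall j, (j < m)%nat -> Ax n A (iter_x m n A eps t k) j <= 1 + eps) /\
     sumx n (iter_x m n A eps t k) <= (1 + eps) * OPT).
Proof.
 destruct hA_norm2 as [i0 [Hi0 Hc0]].
 assert (Hn : (1 <= n)%nat) by lia.
 destruct (hA_nozero i0 Hi0) as [j0 [Hj0 _]].
 assert (Hm : (1 <= m)%nat) by lia.
 assert (H := monot_inv m n A eps t hA_nonneg hA_norm1 heps Hn Hm i0 Hi0 Hc0).
 split.
 - intros k _. apply H.
 - intros k _. destruct (H k) as [Hp [_ Hf]].
   assert (HAx : forall j, (j < m)%nat -> Ax n A (iter_x m n A eps t k) j <= 1 + eps).
   { apply Ax_bound; auto. intros; apply Rlt_le; auto. }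
   split; [auto|split; [auto|]].
   apply sum_opt with (m := m) (A := A); auto. intros; apply Rlt_le; auto.
Qed.
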